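(* For every positive integer $n$, every proper arc-colouring of type I of the complete symmetric digraph $\overleftrightarrow{K_n}$ is distinguishing. Consequently, $$\chi'_{D_{1,2}}(\overleftrightarrow{K_n}) = \chi'_{1,2}(\overleftrightarrow{K_n}) = \min\left\{k : n \leq \binom{k}{\lfloor k/2\rfloor}\right\}.$$
   Context: For a simple graph $G$, the symmetric digraph $\overleftrightarrow{G}$ is obtained by replacing each edge $uv$ of $G$ by the pair of opposite arcs $\overrightarrow{uv}$ and $\overrightarrow{vu}$. An arc-colouring of $\overleftrightarrow{G}$ is proper of type I if any two consecutive arcs $\overrightarrow{uv},\overrightarrow{vw}$ (including the case $w=u$) receive distinct colours, i.e. there are no monochromatic 2-cycles and no monochromatic 2-paths. An arc-colouring is distinguishing if the only automorphism of $\overleftrightarrow{G}$ preserving the colour of every arc is the identity. $\chi'_{1,2}(\overleftrightarrow{G})$ is the least number of colours in a proper arc-colouring of type I of $\overleftrightarrow{G}$, and $\chi'_{D_{1,2}}(\overleftrightarrow{G})$ is the least number of colours in a distinguishing proper arc-colouring of type I. *)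

(* Defs.v *)
From mathcomp Require Import all_boot fingroup perm.
Set Implicit Arguments. Unset Strict Implicit. Unset Printing Implicit Defensive.

(* A simple graph on a finite vertex type T is given by an edge relation e
   (assumed symmetric and irreflexive).  The symmetric digraph of G has as arcs
   exactly the ordered pairs (u,v) with e u v.  An arc-colouring is a map
   c : T -> T -> nat whose value at (u,v) is the colour of the arc uv (values
   at non-arcs are irrelevant). *)

Definition simple_graph (T : finType) (e : rel T) :=
  irreflexive e /\ symmetric e.

Definition arc_colouring_with (T : finType) (e : rel T) (k : nat)
    (c : T -> T -> nat) :=
  forall u v, e u v -> c u v < k.

(* proper of type I: consecutive arcs uv, vw (w = u allowed) get distinct colours *)
Definition proper_I (T : finType) (e : rel T) (c : T -> T -> nat) :=
  forall u v w, e u v -> e v w -> c u v != c v w.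

Definition digraph_aut (T : finType) (e : rel T) (s : {perm T}) :=
  forall x y, e (s x) (s y) = e x y.

Definition colour_preserving (T : finType) (e : rel T) (c : T -> T -> nat)
    (s : {perm T}) :=
  forall x y, e x y -> c (s x) (s y) = c x y.

Definition distinguishing (T : finType) (e : rel T) (c : T -> T -> nat) :=
  forall s : {perm T}, digraph_aut e s -> colour_preserving e c s -> s = 1%g.

Definition is_least (P : nat -> Prop) (m : nat) :=
  P m /\ forall j, P j -> m <= j.

Definition chi12_is (T : finType) (e : rel T) (m : nat) :=
  is_least (fun k => exists c, arc_colouring_with e k c /\ proper_I e c) m.

Definition chiD12_is (T : finType) (e : rel T) (m : nat) :=
  is_least (fun k => exists c, [/\ arc_colouring_with e k c, proper_I e c
                                 & distinguishing e c]) m.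

Definition K (n : nat) : rel 'I_n := fun x y => x != y.
Arguments K n : clear implicits.

(* Main.v *)
Require Import Defs.
From mathcomp Require Import all_boot fingroup perm.
From mathcomp Require Import zify.

Set Implicit Arguments. Unset Strict Implicit. Unset Printing Implicit Defensive.

Lemma bin_mono k m : m < k./2 -> 'C(k, m) <= 'C(k, m.+1).
Proof.
move=> H; rewrite -(leq_pmul2l (ltn0Sn m)) mul_bin_left.
apply: leq_mul => //.
have h2 := odd_double_half k; rewrite -addnn in h2; lia.
Qed.

Lemma bin_le_half k a : 'C(k, a) <= 'C(k, k./2).
Proof.
have up : forall b, b <= k./2 -> 'C(k, b) <= 'C(k, k./2).
  move=> b hb.
  suff H : forall d, d + b <= k./2 -> 'C(k, b) <= 'C(k, d + b).
    by have := H (k./2 - b); rewrite subnK // => /(_ (leqnn _)).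
  elim=> [|d IH] hd //.
  apply: leq_trans (IH _) _; first by lia.
  rewrite addSn; apply: bin_mono; lia.
have h2 := odd_double_half k; rewrite -addnn in h2.
case: (leqP a k./2) => ha; first exact: up.
case: (leqP a k) => hak; last by rewrite bin_small.
rewrite -bin_sub //; apply: up; lia.
Qed.

Lemma lym (T : finType) (k : nat) : forall (S : {set T}) (F : {set {set T}}),
  #|S| = k -> (forall A, A \in F -> A \subset S) ->
  (forall A B, A \in F -> B \in F -> A \subset B -> A = B) ->
  \sum_(A in F) #|A|`! * (k - #|A|)`! <= k`!.
Proof.
elim: k => [|k IH] S F hS hsub hanti; case: (boolP (S \in F)) => SF.
- have -> : F = [set S].
    apply/setP => A; rewrite inE; apply/idP/eqP => [AF|->//].
    exact: hanti _ _ AF SF (hsub _ AF).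
  by rewrite big_set1 hS.
- have S0 : S = set0 by apply/eqP; rewrite -cards_eq0 hS.
  rewrite big1 // => A AF; exfalso.
  have := hsub _ AF; rewrite S0 subset0 => /eqP A0.
  by rewrite S0 -A0 AF in SF.
- have -> : F = [set S].
    apply/setP => A; rewrite inE; apply/idP/eqP => [AF|->//].
    exact: hanti _ _ AF SF (hsub _ AF).
  by rewrite big_set1 hS subnn fact0 muln1.
- have key : forall x, x \in S ->
      \sum_(A in F | x \notin A) #|A|`! * (k - #|A|)`! <= k`!.
    move=> x xS.
    rewrite (eq_bigl (fun A => A \in [set A in F | x \notin A])); last first.
      by move=> A; rewrite inE.
    apply: (IH (S :\ x)).
    + by move: hS; rewrite (cardsD1 x S) xS add1n => -[].
    + by move=> A; rewrite inE => /andP[AF xA]; rewrite subsetD1 hsub.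
    + by move=> A B; rewrite !inE => /andP[AF _] /andP[BF _]; exact: hanti.
  have E : \sum_(A in F) #|A|`! * (k.+1 - #|A|)`! =
           \sum_(x in S) \sum_(A in F | x \notin A) #|A|`! * (k - #|A|)`!.
    symmetry.
    rewrite (exchange_big_dep (fun A => A \in F)) /=; last by move=> x A _ /andP[].
    apply: eq_bigr => A AF.
    rewrite (eq_bigl (fun x => x \in S :\: A)); last first.
      by move=> x; rewrite in_setD AF andbC.
    rewrite sum_nat_const cardsD (setIidPr (hsub _ AF)).
    have lt : #|A| <= k.
      rewrite -ltnS -hS; apply: proper_card; rewrite properEneq hsub // andbT.
      by apply/eqP => AS; rewrite -AS AF in SF.
    by rewrite hS subSn // factS mulnCA.
  rewrite E; apply: (@leq_trans (\sum_(x in S) k`!)).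
    by apply: leq_sum => x xS; exact: key.
  by rewrite sum_nat_const hS factS.
Qed.

Definition Out n k (c : 'I_n -> 'I_n -> nat) (v : 'I_n) : {set 'I_k} :=
  [set i : 'I_k | [exists y, (y != v) && (c v y == i)]].

Lemma out_anti n k c : arc_colouring_with (K n) k c -> proper_I (K n) c ->
  forall u v, Out k c u \subset Out k c v -> u = v.
Proof.
move=> hc hp u v sub; apply/eqP; apply/negPn/negP => uv.
have cuv : c u v < k := hc u v uv.
have : Ordinal cuv \in Out k c u.
  by rewrite inE; apply/existsP; exists v; rewrite eq_sym uv eqxx.
move/(subsetP sub); rewrite inE => /existsP[y /andP[yv /eqP e]].
have := hp u v y uv; rewrite /K eq_sym => /(_ yv).
by rewrite e /= eqxx.
Qed.

Lemma part1 n k c : arc_colouring_with (K n) k c -> proper_I (K n) c ->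
  distinguishing (K n) c.
Proof.
move=> hc hp s _ cp; apply/permP => v; rewrite perm1; symmetry.
apply: (out_anti hc hp).
apply/subsetP => i; rewrite !inE => /existsP[y /andP[yv /eqP e]].
apply/existsP; exists (s y); rewrite (inj_eq perm_inj) yv /= cp ?e //.
by rewrite /K eq_sym.
Qed.

Lemma fact_half k a : a <= k -> k./2`! * (k - k./2)`! <= a`! * (k - a)`!.
Proof.
move=> ha.
have hh : k./2 <= k by have h2 := odd_double_half k; rewrite -addnn in h2; lia.
have E1 := bin_fact ha; have E2 := bin_fact hh.
rewrite -(leq_pmul2l (_ : 0 < 'C(k, a))) ?bin_gt0 // E1 -E2 leq_mul2r.
by rewrite bin_le_half orbT.
Qed.

Lemma lower n k c : arc_colouring_with (K n) k c -> proper_I (K n) c ->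
  n <= 'C(k, k./2).
Proof.
move=> hc hp.
have inj : injective (Out k c).
  by move=> u v e; apply: (out_anti hc hp); rewrite e subxx.
set F := (Out k c) @: [set: 'I_n].
have cF : #|F| = n by rewrite card_imset // cardsT card_ord.
have ck : #|[set: 'I_k]| = k by rewrite cardsT card_ord.
have L := @lym _ k [set: 'I_k] F ck (fun A _ => subsetT A).
have L' : \sum_(A in F) #|A|`! * (k - #|A|)`! <= k`!.
  apply: L => A B /imsetP[u _ ->] /imsetP[v _ ->] sub.
  by rewrite (out_anti hc hp sub).
have hh : k./2 <= k by have h2 := odd_double_half k; rewrite -addnn in h2; lia.
rewrite -(leq_pmul2r (_ : 0 < k./2`! * (k - k./2)`!)); last first.
  by rewrite muln_gt0 !fact_gt0.
rewrite bin_fact // -cF -sum_nat_const.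
apply: leq_trans L'; apply: leq_sum => A _; apply: fact_half.
by have := max_card A; rewrite card_ord.
Qed.

Lemma upper n k : n <= 'C(k, k./2) ->
  exists c, arc_colouring_with (K n) k c /\ proper_I (K n) c.
Proof.
move=> hn.
have hD : n <= #|[set A : {set 'I_k} | #|A| == k./2]|.
  by rewrite card_draws card_ord.
pose f (v : 'I_n) := enum_val (widen_ord hD v).
have fD v : #|f v| = k./2.
  by have := enum_valP (widen_ord hD v); rewrite inE => /eqP.
have finj : injective f.
  by move=> u v /enum_val_inj /(congr1 val) /= /val_inj.
have nz u v : u != v -> exists i, i \in f u :\: f v.
  move=> uv; apply/set0Pn; apply: contra uv; rewrite setD_eq0 => sub.
  apply/eqP; apply: finj; apply/eqP; rewrite eqEcard sub fD fD leqnn //.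
pose c := fun u v => if [pick i in f u :\: f v] is Some i then val i else 0.
have spec u v : u != v -> exists2 i : 'I_k, i \in f u :\: f v & c u v = i.
  move=> uv; rewrite /c; case: pickP => [i hi | h0]; first by exists i.
  by have [i hi] := nz u v uv; rewrite h0 in hi.
exists c; split.
  by move=> u v uv; have [i _ ->] := spec u v uv; exact: ltn_ord.
move=> u v w uv vw; have [i hi ->] := spec u v uv; have [j hj ->] := spec v w vw.
apply: contraTneq hi => /val_inj ->.
by move: hj; rewrite !in_setD => /andP[_ ->].
Qed.

Theorem proposition2p1 (n : nat) (hn : 0 < n) :
  (forall (k : nat) (c : 'I_n -> 'I_n -> nat),
      arc_colouring_with (K n) k c -> proper_I (K n) c ->
      distinguishing (K n) c)
  /\ exists m : nat,
       [/\ is_least (fun k => n <= 'C(k, k./2)) m,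
           chiD12_is (K n) m & chi12_is (K n) m].
Proof.
split; first by move=> k c; exact: part1.
have Pn : n <= 'C(n, n./2) by have := bin_le_half n 1; rewrite bin1.
have [m Pm minm] := ex_minnP (ex_intro (fun k => n <= 'C(k, k./2)) n Pn).
exists m; split.
- by split => // j; exact: minm.
- split.
    have [c [hc hp]] := upper Pm; exists c; split => //; exact: part1 hc hp.
  by move=> j [c [hc hp _]]; apply: minm; exact: lower hc hp.
- split; first exact: upper Pm.
  by move=> j [c [hc hp]]; apply: minm; exact: lower hc hp.
Qed.
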